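(* Let $q=2^r>2$ and $n\ge 1$. Then $$\beta_q^{(n)}(x_1,\dots,x_n)=\sum_{1\le i_1,\dots,i_n\le 2^r-2}x_1^{i_1}x_2^{i_2}\cdots x_n^{i_n}\;+\;x_1+\cdots+x_n$$ is a local permutation polynomial in $\mathbb{F}_q[x_1,\dots,x_n]$ of degree $n(2^r-2)$.
   Context: $\mathbb{F}_q$ is the finite field with $q$ elements. A polynomial $f\in\mathbb{F}_q[x_1,\dots,x_n]$ is a local permutation polynomial (LPP) if, for each $i\in\{1,\dots,n\}$ and each choice of $(a_1,\dots,a_{i-1},a_{i+1},\dots,a_n)\in\mathbb{F}_q^{n-1}$, the univariate polynomial $f(a_1,\dots,a_{i-1},x_i,a_{i+1},\dots,a_n)$ induces a bijection of $\mathbb{F}_q$. Degree means total degree. *)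

(* Defs.v *)
From HB Require Import structures.
From mathcomp Require Import all_boot all_order all_algebra all_field.
From mathcomp Require Import mpoly.
Set Implicit Arguments. Unset Strict Implicit. Unset Printing Implicit Defensive.
Import GRing.Theory.
Local Open Scope ring_scope.

(* Local permutation polynomial: for every coordinate i and every choice of the
   other coordinates (a j, j <> i; the value a i is ignored), the univariate map
   x |-> f(a_1,..,x,..,a_n) is a bijection of F. *)
Definition is_LPP (F : finFieldType) (n : nat) (f : {mpoly F[n]}) : Prop :=
  forall (i : 'I_n) (a : 'I_n -> F),
    bijective (fun x : F => f.@[fun j => if j == i then x else a j]).

(* beta_q^(n) = sum_{1 <= i_1..i_n <= q-2} x_1^{i_1} ... x_n^{i_n} + x_1 + ... + x_n,
   the exponent i_j being (e j).+1 with e j : 'I_(q-2). *)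
Definition beta (F : finFieldType) (n : nat) : {mpoly F[n]} :=
  \sum_(e : {ffun 'I_n -> 'I_(#|F| - 2)}) \prod_(j < n) 'X_j ^+ (e j).+1
  + \sum_(j < n) 'X_j.

(* Main.v *)
Require Import Defs.
From HB Require Import structures.
From mathcomp Require Import all_boot all_order all_algebra all_field.
From mathcomp Require Import mpoly.
From mathcomp Require Import ring zify.
Set Implicit Arguments. Unset Strict Implicit. Unset Printing Implicit Defensive.
Import GRing.Theory.
Local Open Scope ring_scope.

Section S.
Variables (F : finFieldType) (r : nat).
Hypothesis hF : #|F| = (2 ^ r)%N.
Hypothesis hr : (2 < 2 ^ r)%N.

Lemma char2 : (2%N \in [pchar F]).
Proof. exact: (card_finPcharP hF). Qed.

Lemma opp_id (x : F) : - x = x.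
Proof. exact: (oppr_pchar2 char2). Qed.

Definition Sf (y : F) := \sum_(k < #|F| - 2) y ^+ k.+1.

Lemma tele (y : F) N : (y - 1) * \sum_(k < N) y ^+ k.+1 = y ^+ N.+1 - y.
Proof.
elim: N => [|N IH]; first by rewrite big_ord0 mulr0 expr1 subrr.
rewrite big_ord_recr /= mulrDr IH !exprS; ring.
Qed.

Lemma Sf_gen (y : F) : y != 0 -> y != 1 -> Sf y = 1.
Proof.
move=> y0 y1.
have hq : (#|F| - 2).+1 = (#|F|).-1.
  rewrite hF; move: hr; case: (2 ^ r)%N => [|[|[|k]]] //.
have yq : y ^+ (#|F|).-1 = 1.
  apply: (mulfI y0); rewrite mulr1 -(exprS y) prednK ?expf_card //.
  by rewrite hF; move: hr; case: (2 ^ r)%N.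
have : (y - 1) * Sf y = (y - 1) * 1.
  by rewrite /Sf tele hq yq mulr1 -opprB opp_id.
by apply: mulfI; rewrite subr_eq0.
Qed.

Lemma Sf0 : Sf 0 = 0.
Proof. by apply: big1 => k _; rewrite expr0n. Qed.

Lemma Sf1 : Sf 1 = 0.
Proof.
rewrite /Sf (eq_bigr (fun _ => 1)) => [|k _]; last by rewrite expr1n.
rewrite sumr_const card_ord hF.
have -> : (2 ^ r - 2 = (2 ^ r.-1 - 1) * 2)%N.
  case: r hr => [|r'] //= _; rewrite expnS mulnBl mulnC; lia.
by rewrite natrM (pcharf0 char2) mulr0.
Qed.

Lemma Sf01 y : Sf y = 0 \/ Sf y = 1.
Proof.
have [->|y0] := eqVneq y 0; first by left; exact: Sf0.
have [->|y1] := eqVneq y 1; first by left; exact: Sf1.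
by right; apply: Sf_gen.
Qed.

Lemma h_inj (c d : F) : (c = 0 \/ c = 1) -> injective (fun x => c * Sf x + x + d).
Proof.
move=> [->|->] x y /=.
  by rewrite !mul0r !add0r => /addIr.
rewrite !mul1r => /addIr.
have S2 z : (z == 0) || (z == 1) -> Sf z = 0.
  by case/orP=> /eqP->; [exact: Sf0 | exact: Sf1].
have S3 z : ~~ ((z == 0) || (z == 1)) -> Sf z = 1.
  by rewrite negb_or => /andP[]; exact: Sf_gen.
case Hx: ((x == 0) || (x == 1)); case Hy: ((y == 0) || (y == 1));
  rewrite ?(S2 _ Hx) ?(S2 _ Hy) ?(S3 x (negbT Hx)) ?(S3 y (negbT Hy)) ?add0r //.
- move=> exy; have ey : y = x + 1.
    by rewrite exy addrC addrA (addrr_pchar2 char2) add0r.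
  move: Hy; rewrite ey.
  by case/orP: Hx => /eqP->; rewrite ?add0r ?eqxx ?orbT // (addrr_pchar2 char2) eqxx.
- move=> exy; have ex : x = y + 1.
    by rewrite -exy addrC addrA (addrr_pchar2 char2) add0r.
  move: Hx; rewrite ex.
  by case/orP: Hy => /eqP->; rewrite ?add0r ?eqxx ?orbT // (addrr_pchar2 char2) eqxx.
- by move/addrI.
Qed.

Lemma beta_eval n (v : 'I_n -> F) :
  (beta F n).@[v] = \prod_(j < n) Sf (v j) + \sum_(j < n) v j.
Proof.
rewrite /beta mevalD !raddf_sum /=; congr (_ + _); last first.
  by apply: eq_bigr => j _; rewrite mevalXU.
rewrite /Sf bigA_distr_bigA /=; apply: eq_bigr => e _.
rewrite rmorph_prod /=; apply: eq_bigr => j _.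
by rewrite rmorphXn /= mevalXU.
Qed.


Lemma beta_eval_i n (i : 'I_n) (a : 'I_n -> F) x :
  (beta F n).@[fun j => if j == i then x else a j] =
  Sf x * \prod_(j < n | j != i) Sf (a j) + (x + \sum_(j < n | j != i) a j).
Proof.
rewrite beta_eval (bigD1 i) // (bigD1 i (P := xpredT)) // eqxx.
congr (_ * _ + (_ + _)).
  by apply: eq_bigr => j /negbTE ->.
by apply: eq_bigr => j /negbTE ->.
Qed.

Lemma beta_LPP n : is_LPP (beta F n).
Proof.
move=> i a; apply: injF_bij => x y.
rewrite !beta_eval_i.
have c01 : \prod_(j < n | j != i) Sf (a j) = 0 \/ \prod_(j < n | j != i) Sf (a j) = 1.
  apply: (big_ind (fun c => c = 0 \/ c = 1)).
  - by right.
  - by move=> u w [->|->] [->|->]; rewrite ?mul0r ?mulr0 ?mulr1; auto.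
  - move=> j _; exact: Sf01.
move: c01; move: (\prod_(j < n | j != i) Sf (a j)) => c c01.
move: (\sum_(j < n | j != i) a j) => d E.
apply: (h_inj (d := d) c01).
by rewrite /= !(mulrC c) !addrA in E *.
Qed.

Definition mE n (e : {ffun 'I_n -> 'I_(#|F| - 2)}) : 'X_{1..n} :=
  [multinom (e j).+1 | j < n].

Lemma beta_coef n m : (beta F n)@_m =
  \sum_(e : {ffun 'I_n -> 'I_(#|F| - 2)}) (mE e == m)%:R + \sum_(j < n) (mnm1 j == m)%:R.
Proof.
rewrite /beta mcoeffD !raddf_sum /=; congr (_ + _).
  apply: eq_bigr => e _; rewrite -mcoeffX mpolyXE_id; congr (_ @_ m).
  by apply: eq_bigr => j _; rewrite mnmE.
by apply: eq_bigr => j _; rewrite mcoeffX.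
Qed.

Lemma mdeg_mE n e : (mdeg (@mE n e) <= n * (#|F| - 2))%N.
Proof.
rewrite mdegE -[n in (_ <= n * _)%N]card_ord -sum_nat_const.
by apply: leq_sum => j _; rewrite mnmE ltn_ord.
Qed.

Lemma N2 : (2 <= #|F| - 2)%N.
Proof. rewrite hF; move: hr; case: r => [|[|r']] //= _; rewrite !expnS; lia. Qed.

Lemma beta_msize_le n : (0 < n)%N -> (msize (beta F n) <= (n * (#|F| - 2)).+1)%N.
Proof.
move=> n0; rewrite msizeE; apply/bigmax_leqP_seq => m Hm _; rewrite ltnS.
rewrite leqNgt; apply/negP => Hlt.
move: Hm; rewrite mcoeff_msupp beta_coef !big1 ?addr0 ?eqxx //.
  move=> j _; case: eqP => // Ej; move: Hlt; rewrite -Ej mdeg1.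
  move=> H; exfalso; have := N2; nia.
move=> e _; case: eqP => // Ej; move: Hlt; rewrite -Ej.
by rewrite ltnNge mdeg_mE.
Qed.

Definition M n : 'X_{1..n} := [multinom (#|F| - 2) | j < n].

Lemma beta_coefM n : (0 < n)%N -> (beta F n)@_(M n) = 1.
Proof.
move=> n0.
have hlt : ((#|F| - 2).-1 < #|F| - 2)%N by have := N2; case: (#|F| - 2)%N.
pose e0 : {ffun 'I_n -> 'I_(#|F| - 2)} := [ffun _ => Ordinal hlt].
rewrite beta_coef (bigD1 e0) //= big1 ?addr0; last first.
  move=> e ne; case: eqP => // Ee; case/eqP: ne; apply/ffunP => j.
  have := congr1 (fun m : 'X_{1..n} => m j) Ee; rewrite !mnmE ffunE => Ej.
  by apply: val_inj => /=; move/(congr1 predn): Ej.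
rewrite big1 ?addr0.
  have -> : mE e0 = M n.
    by apply/mnmP => j; rewrite !mnmE ffunE /= prednK //; have := N2; case: (#|F| - 2)%N.
  by rewrite eqxx.
move=> j _; case: eqP => // Ej.
have := congr1 mdeg Ej; rewrite mdeg1 /M mdegE.
rewrite (eq_bigr (fun _ => (#|F| - 2)%N)) => [|i _]; last by rewrite mnmE.
rewrite sum_nat_const card_ord => H; have := N2; nia.
Qed.

Lemma beta_msize n : (0 < n)%N -> msize (beta F n) = (n * (#|F| - 2)).+1.
Proof.
move=> n0; apply/eqP; rewrite eqn_leq beta_msize_le //=.
have : M n \in msupp (beta F n) by rewrite mcoeff_msupp beta_coefM // oner_neq0.
move/msize_mdeg_lt; rewrite /M mdegE.
rewrite (eq_bigr (fun _ => (#|F| - 2)%N)) => [|i _]; last by rewrite mnmE.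
by rewrite sum_nat_const card_ord.
Qed.
End S.

Local Close Scope ring_scope.

Theorem mainTheorem9 (F : finFieldType) (r n : nat) :
  #|F| = 2 ^ r -> 2 < 2 ^ r -> 0 < n ->
  is_LPP (beta F n) /\ msize (beta F n) = (n * (2 ^ r - 2)).+1.
Proof.
move=> hF hr n0; split; first exact: (beta_LPP hF hr).
by rewrite (beta_msize hF hr n0) hF.
Qed.
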